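(* Let $X$ be a random variable with $\mathbb{E}X=0$ and $0<\mathbb{E}|X|^3<\infty$, and let $b>0$. Then for all $\lambda,\theta>0$, $$\mathbb{E}e^{\lambda bX-\theta(bX)^2}=1+(\lambda^2/2-\theta)b^2\mathbb{E}X^2+\alpha b^3\mathbb{E}X^3+\beta b^4\mathbb{E}X^4I_{\{|bX|\le1\}}+\gamma\big(b^3\mathbb{E}|X|^3I_{\{|bX|>1\}}+b^5\mathbb{E}|X|^5I_{\{|bX|\le1\}}\big)$$ $$\le\exp\Big\{(\lambda^2/2-\theta)b^2\mathbb{E}X^2+\alpha b^3\mathbb{E}X^3+\beta b^4\mathbb{E}X^4I_{\{|bX|\le1\}}+\gamma\big(b^3\mathbb{E}|X|^3I_{\{|bX|>1\}}+b^5\mathbb{E}|X|^5I_{\{|bX|\le1\}}\big)\Big\},$$ where $\alpha=\lambda^3/6-\lambda\theta$, $\beta=\theta^2/2-\lambda^2\theta/2+\lambda^4/24$, and $\gamma$ is a number with $|\gamma|\le\max(O^{(1)}_{\lambda,\theta},O^{(2)}_{\lambda,\theta})$, where $O^{(1)}_{\lambda,\theta}=e^{\lambda^2/(4\theta)}+\lambda+|\lambda^2/2-\theta|+|\lambda^3/6-\lambda\theta|$ and $O^{(2)}_{\lambda,\theta}=\tfrac16(3\lambda\theta^2+\theta^3)+\tfrac1{24}(4\lambda^3\theta+6\lambda^2\theta^2+4\lambda\theta^3+\theta^4)+e^{\lambda^2/(4\theta)}(\lambda+\theta)^5$. *)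

(* Defs.v *)
From mathcomp Require Import all_boot all_order all_algebra.
From mathcomp Require Import all_classical all_reals all_analysis.
Set Implicit Arguments. Unset Strict Implicit. Unset Printing Implicit Defensive.
Import Order.TTheory GRing.Theory Num.Theory.
Local Open Scope ring_scope.

(* Real-valued expectation of a function whose expectation is known to be
   finite (under the hypotheses of the lemma all expectations used below
   are finite, so [fine] loses nothing). *)
Definition rE d (T : measurableType d) (R : realType) (P : probability T R)
  (f : T -> R) : R := fine ('E_P[f])%E.

Definition O1 (R : realType) (l t : R) : R :=
  expR (l ^+ 2 / (4 * t)) + l + `|l ^+ 2 / 2 - t| + `|l ^+ 3 / 6 - l * t|.

Definition O2 (R : realType) (l t : R) : R :=
  (3 * l * t ^+ 2 + t ^+ 3) / 6
  + (4 * l ^+ 3 * t + 6 * l ^+ 2 * t ^+ 2 + 4 * l * t ^+ 3 + t ^+ 4) / 24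
  + expR (l ^+ 2 / (4 * t)) * (l + t) ^+ 5.

(* Main.v *)
Require Import Defs.
From mathcomp Require Import all_boot all_order all_algebra.
From mathcomp Require Import all_classical all_reals all_analysis.
From mathcomp Require Import measurable_realfun ring lra.
Set Implicit Arguments. Unset Strict Implicit. Unset Printing Implicit Defensive.
Import Order.TTheory GRing.Theory Num.Theory.
Import numFieldNormedType.Exports.
Local Open Scope classical_set_scope.
Local Open Scope ring_scope.

Section taylor.
Variable R : realType.

Fixpoint Sx (n : nat) (x : R) : R :=
  if n is n'.+1 then Sx n' x + x ^+ n' / n'`!%:R else 0.

Lemma Sx_deriv n (x : R) : is_derive x (1:R) (Sx n.+1) (Sx n x).
Proof.
elim: n x => [|n IH] x.
  have -> : Sx 1 = cst 1 by apply/funext => t /=; rewrite add0r expr0 divr1.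
  exact: is_derive_cst.
have H := is_deriveD (IH x) (is_deriveZ ((n.+1)`!%:R^-1) (is_deriveX n.+1 (is_derive_id x (1:R)))).
move: H; set F := (X in is_derive _ _ X _) => H.
have -> : Sx n.+2 = F.
  by apply/funext => t; rewrite /F !fctE /=; congr (_ + _); rewrite mulrC.
apply: is_derive_eq H _.
rewrite /= /id -[_ *: 1]/(_ * 1) mulr1 -[_ *: _]/(_ * _); congr (_ + _).
rewrite factS natrM invfM mulrA mulrC; congr (_ * _).
by rewrite mulrC mulrA mulfV ?mul1r // pnatr_eq0.
Qed.

Lemma Sx0 n : Sx n.+1 0 = 1.
Proof.
elim: n => [|n IH] /=; first by rewrite add0r expr0 divr1.
by rewrite /= in IH; rewrite IH expr0n /= mul0r addr0.
Qed.

Lemma Sx_bound n x : `|expR x - Sx n x| <= expR (Num.max x 0) * `|x| ^+ n.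
Proof.
elim: n x => [|n IH] x.
  rewrite /= subr0 expr0 mulr1 ger0_norm ?expR_ge0 //.
  by rewrite ler_expR le_max lexx.
have df (t : R) := is_deriveB (is_derive_expR t) (Sx_deriv n t).
move: df; set f := (X in forall t : R, is_derive t (1:R) X _) => df.
have fE t : f t = expR t - Sx n.+1 t by rewrite /f !fctE.
have cf (a b : R) : {within `[a, b], continuous f}.
  apply: derivable_within_continuous => t _.
  by have := df t; case.
have f0 : f 0 = 0 by rewrite fE expR0 Sx0 subrr.
have [x0|x0|->] := ltgtP x 0.
- have [c] := MVT x0 (fun t _ => df t) (cf x 0).
  rewrite in_itv /= => /andP[xc c0].
  rewrite f0 sub0r fE => /(congr1 (fun z => `|z|)); rewrite normrN => ->.
  rewrite normrM sub0r normrN exprS [`|x| * _]mulrC mulrA.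
  rewrite ler_pM2r ?normr_gt0 ?lt_eqF //.
  apply: le_trans (IH c) _.
  rewrite (max_r (ltW c0)).
  apply: ler_pM; rewrite ?expR_ge0 ?exprn_ge0 ?normr_ge0 //.
  apply: lerXn2r; rewrite ?nnegrE //.
  by rewrite !ltr0_norm // lerN2 ltW.
- have [c] := MVT x0 (fun t _ => df t) (cf 0 x).
  rewrite in_itv /= => /andP[c0 cx].
  rewrite f0 subr0 fE => ->.
  rewrite normrM subr0 exprS [`|x| * _]mulrC mulrA.
  rewrite ler_pM2r ?normr_gt0 ?gt_eqF //.
  apply: le_trans (IH c) _.
  rewrite (max_l (ltW c0)).
  apply: ler_pM; rewrite ?expR_ge0 ?exprn_ge0 ?normr_ge0 //.
    by rewrite ler_expR ltW.
  apply: lerXn2r; rewrite ?nnegrE //.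
  by rewrite !gtr0_norm // ltW.
- by rewrite normr0 expr0n /= mulr0 -fE f0 normr0.
Qed.
End taylor.

Section pt.
Variable R : realType.

Lemma g_le (l t y : R) : 0 < t -> l * y - t * y ^+ 2 <= l ^+ 2 / (4 * t).
Proof.
move=> ht.
have h : 0 <= (l - 2 * t * y) ^+ 2 / (4 * t) by rewrite divr_ge0 ?sqr_ge0 // ltW // mulr_gt0.
have -> : l ^+ 2 / (4 * t) = (l * y - t * y ^+ 2) + (l - 2 * t * y) ^+ 2 / (4 * t).
  by field; lra.
by rewrite lerDl.
Qed.

Lemma pointwise (l t y : R) : 0 < l -> 0 < t ->
  `|expR (l * y - t * y ^+ 2) -
    (1 + l * y + (l ^+ 2 / 2 - t) * y ^+ 2 + (l ^+ 3 / 6 - l * t) * y ^+ 3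
     + (if `|y| <= 1 then (t ^+ 2 / 2 - l ^+ 2 * t / 2 + l ^+ 4 / 24) * y ^+ 4 else 0))|
  <= Num.max (O1 l t) (O2 l t) *
     ((if 1 < `|y| then `|y| ^+ 3 else 0) + (if `|y| <= 1 then `|y| ^+ 5 else 0)).
Proof.
move=> hl ht.
set g := l * y - t * y ^+ 2.
set e := expR (l ^+ 2 / (4 * t)).
have hg : g <= l ^+ 2 / (4 * t) by exact: g_le.
have e1 : 1 <= e by rewrite -expR0 ler_expR divr_ge0 ?sqr_ge0 // ltW // mulr_gt0.
have hE : expR g <= e by rewrite ler_expR.
have hE0 : 0 < expR g by exact: expR_gt0.
set u := `|y|.
have u0 : 0 <= u by exact: normr_ge0.
case: (leP u 1) => hu.
- rewrite add0r.
  have hT := Sx_bound 5 g.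
  have hkey : Sx 5 g - (1 + l * y + (l ^+ 2 / 2 - t) * y ^+ 2 + (l ^+ 3 / 6 - l * t) * y ^+ 3
     + (t ^+ 2 / 2 - l ^+ 2 * t / 2 + l ^+ 4 / 24) * y ^+ 4)
     = y ^+ 5 * ((3 * l * t ^+ 2 - t ^+ 3 * y) / 6
        + (- 4 * l ^+ 3 * t + 6 * l ^+ 2 * t ^+ 2 * y - 4 * l * t ^+ 3 * y ^+ 2 + t ^+ 4 * y ^+ 3) / 24).
    by rewrite /= /g !factS fact0 !natrM; field.
  have bnd (c p : R) : 0 <= c -> `|p| <= 1 -> -c <= c * p /\ c * p <= c.
    move=> c0; rewrite ler_norml => /andP[h1 h2]; split.
      by rewrite -mulrN1 ler_wpM2l.
    by rewrite -[X in _ <= X]mulr1 ler_wpM2l.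
  have y1 : `|y| <= 1 by [].
  have y2 : `|y ^+ 2| <= 1 by rewrite normrX exprn_ile1.
  have y3 : `|y ^+ 3| <= 1 by rewrite normrX exprn_ile1.
  have [a1 a2] := bnd (t ^+ 3) y (exprn_ge0 _ (ltW ht)) y1.
  have [b1 b2] := bnd (6 * l ^+ 2 * t ^+ 2) y ltac:(by rewrite !mulr_ge0 ?exprn_ge0 ?ltW) y1.
  have [c1 c2] := bnd (4 * l * t ^+ 3) (y ^+ 2) ltac:(by rewrite !mulr_ge0 ?exprn_ge0 ?ltW) y2.
  have [d1 d2] := bnd (t ^+ 4) (y ^+ 3) (exprn_ge0 _ (ltW ht)) y3.
  set Q := (X in y ^+ 5 * X) in hkey.
  set P0 := (3 * l * t ^+ 2 + t ^+ 3) / 6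
     + (4 * l ^+ 3 * t + 6 * l ^+ 2 * t ^+ 2 + 4 * l * t ^+ 3 + t ^+ 4) / 24.
  have hQ : `|Q| <= P0.
    have l3t : 0 <= l ^+ 3 * t by rewrite mulr_ge0 ?exprn_ge0 ?ltW.
    have lt2 : 0 <= l * t ^+ 2 by rewrite mulr_ge0 ?exprn_ge0 ?ltW.
    rewrite /Q /P0 ler_norml; apply/andP; split; lra.
  have hgu : `|g| <= (l + t) * u.
    rewrite /g (_ : l * y - t * y ^+ 2 = y * (l - t * y)); last by ring.
    rewrite normrM mulrC ler_wpM2r //.
    apply: (le_trans (ler_normB _ _)).
    rewrite normrM (ger0_norm (ltW hl)) (ger0_norm (ltW ht)) lerD2l.
    by rewrite -[X in _ <= X]mulr1 ler_wpM2l // ltW.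
  have hmax : Num.max g 0 <= l ^+ 2 / (4 * t).
    rewrite ge_max hg /=; rewrite divr_ge0 ?sqr_ge0 // ltW // mulr_gt0 //.
  have hR : `|expR g - Sx 5 g| <= e * ((l + t) ^+ 5 * u ^+ 5).
    apply: (le_trans hT); apply: ler_pM; rewrite ?expR_ge0 ?exprn_ge0 ?normr_ge0 //.
      by rewrite ler_expR.
    rewrite -exprMn; apply: lerXn2r; rewrite ?nnegrE ?normr_ge0 ?mulr_ge0 // ?ltW ?addr_gt0 //.
  have hS : `|Sx 5 g - (1 + l * y + (l ^+ 2 / 2 - t) * y ^+ 2 + (l ^+ 3 / 6 - l * t) * y ^+ 3
     + (t ^+ 2 / 2 - l ^+ 2 * t / 2 + l ^+ 4 / 24) * y ^+ 4)| <= u ^+ 5 * P0.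
    by rewrite hkey normrM normrX ler_wpM2l ?exprn_ge0.
  have hO : O2 l t <= Num.max (O1 l t) (O2 l t) by rewrite le_max lexx orbT.
  apply: le_trans (ler_wpM2r (exprn_ge0 _ u0) hO).
  set L := (X in `|expR g - X|).
  rewrite (_ : expR g - L = (expR g - Sx 5 g) + (Sx 5 g - L)); last by ring.
  apply: (le_trans (ler_normD _ _)).
  rewrite /O2 -/e -/P0.
  have := lerD hR hS. lra.
- rewrite !addr0.
  have u1 : u <= u ^+ 3.
    by rewrite -[X in X <= _]expr1 ler_eXn2l // ltW.
  have u2 : u ^+ 2 <= u ^+ 3.
    by rewrite ler_eXn2l // ltW.
  set c2 := l ^+ 2 / 2 - t.
  set al := l ^+ 3 / 6 - l * t.
  have h1 : `|expR g - 1| <= e.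
    rewrite ler_norml; apply/andP; split; lra.
  have h2 : `|l * y| <= l * u ^+ 3.
    by rewrite normrM (ger0_norm (ltW hl)) ler_wpM2l ?(ltW hl).
  have h3 : `|c2 * y ^+ 2| <= `|c2| * u ^+ 3.
    by rewrite normrM normrX ler_wpM2l.
  have h4 : `|al * y ^+ 3| <= `|al| * u ^+ 3.
    by rewrite normrM normrX.
  have h5 : e <= e * u ^+ 3.
    by rewrite ler_peMr ?(le_trans _ e1) ?exprn_ege1 // ltW.
  have hO : O1 l t <= Num.max (O1 l t) (O2 l t) by rewrite le_max lexx.
  apply: le_trans (ler_wpM2r (exprn_ge0 _ u0) hO).
  rewrite (_ : expR g - (1 + l * y + c2 * y ^+ 2 + al * y ^+ 3)
     = (expR g - 1) - (l * y) - (c2 * y ^+ 2) - (al * y ^+ 3)); last by ring.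
  apply: (le_trans (ler_normB _ _)).
  apply: (le_trans (lerD (ler_normB _ _) (lexx _))).
  apply: (le_trans (lerD (lerD (ler_normB _ _) (lexx _)) (lexx _))).
  rewrite /O1 -/e -/c2 -/al.
  lra.
Qed.
End pt.

Ltac mf := lazymatch goal with
 | |- measurable_fun _ (fun x => (_)%:E) => apply/measurable_EFinP; mf
 | |- measurable_fun _ (EFin \o _) => apply/measurable_EFinP; mf
 | |- measurable_fun _ (fun x => - _) => apply: measurable_funN; mf
 | |- measurable_fun _ (fun x => _ + _) => apply: measurable_funD; mf
 | |- measurable_fun _ (fun x => _ - _) => apply: measurable_funB; mf
 | |- measurable_fun _ (fun x => _ * _) => apply: measurable_funM; mf
 | |- measurable_fun _ (fun x => _ ^+ _) => apply: measurable_funX; mf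
 | |- measurable_fun _ (fun x => if _ then _ else _) => apply: measurable_fun_ifT; mf
 | |- measurable_fun _ (fun x => _ <= _) => apply: measurable_fun_ler; mf
 | |- measurable_fun _ (fun x => _ < _) => apply: measurable_fun_ltr; mf
 | |- measurable_fun _ (fun x => `|_|) => apply: (measurableT_comp (@normr_measurable _ setT)); mf
 | |- measurable_fun _ (fun x => expR _) => apply: (measurableT_comp (@measurable_expR _)); mf
 | _ => first [exact: measurable_funPT | exact: measurable_cst]
end.

Section meas.
Context d (T : measurableType d) (R : realType) (P : probability T R).
Variable X : {RV P >-> R}.
Hypothesis h3fin : ('E_P[(fun w => `|X w| ^+ 3)%R] < +oo)%E.

Definition intg (f : T -> R) := P.-integrable setT (EFin \o f).

Lemma rE_I (f : T -> R) : rE P f = \int[P]_w f w.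
Proof. by rewrite /rE /Rintegral unlock. Qed.

Lemma iD (f g : T -> R) : intg f -> intg g -> intg (fun w => f w + g w).
Proof. by move=> hf hg; exact: (integrableD measurableT hf hg). Qed.

Lemma iZ (k : R) (f : T -> R) : intg f -> intg (fun w => k * f w).
Proof. by move=> hf; exact: (integrableZl measurableT k hf). Qed.

Lemma iX3 : intg (fun w => 1 + `|X w| ^+ 3).
Proof.
apply: iD; first exact: finite_measure_integrable_cst.
apply/integrableP; split.
  apply/measurable_EFinP; apply: measurable_funX.
  exact: measurableT_comp.
apply: le_lt_trans h3fin; rewrite unlock.
apply: ge0_le_integral => //=; try by mf.
by move=> w _; rewrite lee_fin normrX normr_id.
Qed.


Lemma iC (c : R) : intg (fun _ => c).
Proof. exact: finite_measure_integrable_cst. Qed.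

Lemma idom (f : T -> R) (K : R) : measurable_fun setT f -> 0 <= K ->
  (forall w, `|f w| <= K * (1 + `|X w| ^+ 3)) -> intg f.
Proof.
move=> mfm K0 hf; have := iZ K iX3; rewrite /intg => hg.
apply: (le_integrable measurableT _ _ hg).
  exact/measurable_EFinP.
move=> w _ /=; rewrite lee_fin (ger0_norm (mulr_ge0 K0 _)) //.
Qed.

Lemma iB (f g : T -> R) : intg f -> intg g -> intg (fun w => f w - g w).
Proof. by move=> hf hg; exact: (integrableB measurableT hf hg). Qed.

Lemma iAbs (f : T -> R) : intg f -> intg (fun w => `|f w|).
Proof.
move=> hf; have hg := hf; rewrite /intg in hg *.
apply: (le_integrable measurableT _ _ hg).
  apply/measurable_EFinP; apply: measurableT_comp => //.
  by case/integrableP: hf => /measurable_EFinP.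
by move=> w _ /=; rewrite lee_fin normr_id.
Qed.

End meas.

Ltac ig := repeat (first [ assumption | apply: iC | apply: iB | apply: iD | apply: iZ ]).

Unset Implicit Arguments.
Theorem lemma4p1 (d : measure_display) (T : measurableType d) (R : realType)
  (P : probability T R) (X : {RV P >-> R}) (b : R)
  (hmean : ('E_P[X] = 0)%E)
  (h3pos : (0 < 'E_P[(fun w => `|X w| ^+ 3)%R])%E)
  (h3fin : ('E_P[(fun w => `|X w| ^+ 3)%R] < +oo)%E)
  (hb : 0 < b) (lam th : R) (hlam : 0 < lam) (hth : 0 < th) :
  let alpha := lam ^+ 3 / 6 - lam * th in
  let beta := th ^+ 2 / 2 - lam ^+ 2 * th / 2 + lam ^+ 4 / 24 in
  let S := (lam ^+ 2 / 2 - th) * b ^+ 2 * rE P (fun w => X w ^+ 2)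
           + alpha * b ^+ 3 * rE P (fun w => X w ^+ 3)
           + beta * b ^+ 4 *
               rE P (fun w => if `|b * X w| <= 1 then X w ^+ 4 else 0) in
  let C := b ^+ 3 * rE P (fun w => if `|b * X w| > 1 then `|X w| ^+ 3 else 0)
           + b ^+ 5 * rE P (fun w => if `|b * X w| <= 1 then `|X w| ^+ 5 else 0) in
  exists gamma : R,
    `|gamma| <= Num.max (O1 lam th) (O2 lam th) /\
    ('E_P[(fun w => expR (lam * (b * X w) - th * (b * X w) ^+ 2))%R]
       = (1 + S + gamma * C)%:E)%E /\
    1 + S + gamma * C <= expR (S + gamma * C).
Proof.
move=> alpha beta S C.
set M := Num.max (O1 lam th) (O2 lam th).
pose F w := expR (lam * (b * X w) - th * (b * X w) ^+ 2).
pose X4 w := if `|b * X w| <= 1 then X w ^+ 4 else 0.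
pose A3 w := if `|b * X w| > 1 then `|X w| ^+ 3 else 0.
pose A5 w := if `|b * X w| <= 1 then `|X w| ^+ 5 else 0.
pose L w := 1 + (lam * b) * X w + ((lam ^+ 2 / 2 - th) * b ^+ 2) * X w ^+ 2
   + (alpha * b ^+ 3) * X w ^+ 3 + (beta * b ^+ 4) * X4 w.
pose G w := b ^+ 3 * A3 w + b ^+ 5 * A5 w.
have M0 : 0 <= M.
  rewrite le_max; apply/orP; left; rewrite /O1.
  by rewrite !addr_ge0 ?normr_ge0 ?expR_ge0 // ltW.
have hpt w : `|F w - L w| <= M * G w.
  have eL : L w = 1 + lam * (b * X w) + (lam ^+ 2 / 2 - th) * (b * X w) ^+ 2 +
     (lam ^+ 3 / 6 - lam * th) * (b * X w) ^+ 3 +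
     (if `|b * X w| <= 1
      then (th ^+ 2 / 2 - lam ^+ 2 * th / 2 + lam ^+ 4 / 24) * (b * X w) ^+ 4
      else 0).
    by rewrite /L /X4 /alpha /beta; case: ifP => _; ring.
  have eG : G w = (if 1 < `|b * X w| then `|b * X w| ^+ 3 else 0) +
     (if `|b * X w| <= 1 then `|b * X w| ^+ 5 else 0).
    by rewrite /G /A3 /A5; case: ifP => _; case: ifP => _;
      rewrite ?normrM ?(gtr0_norm hb) ?exprMn; ring.
  by rewrite eL eG; exact: pointwise.
have pb (u : R) k : 0 <= u -> (k <= 3)%N -> u ^+ k <= 1 + u ^+ 3.
  move=> u0 hk; case: (leP u 1) => hu.
    by apply: le_trans (exprn_ile1 _ u0 hu) _; rewrite lerDl exprn_ge0.
  apply: le_trans (_ : u ^+ 3 <= _); last by rewrite lerDr.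
  by rewrite ler_eXn2l.
have bX w : `|b * X w| <= 1 -> `|X w| <= b^-1.
  by rewrite normrM (gtr0_norm hb) => h; rewrite -[b^-1]mulr1 ler_pdivlMl.
have iXk k : (k <= 3)%N -> intg P (fun w => X w ^+ k).
  move=> hk; apply: (idom h3fin (K := 1)) => //; first by mf.
  by move=> w; rewrite mul1r normrX pb.
have iF : intg P F.
  apply: (idom h3fin (K := expR (lam ^+ 2 / (4 * th))));
    [by rewrite /F; mf | exact: expR_ge0 | ].
  move=> w; rewrite /F ger0_norm ?expR_ge0 //.
  apply: le_trans (_ : expR (lam ^+ 2 / (4 * th)) <= _).
    by rewrite ler_expR g_le.
  by rewrite ler_peMr ?expR_ge0 // lerDl exprn_ge0.
have iX4 : intg P X4.
  apply: (idom h3fin (K := b^-1)); [by rewrite /X4; mf | by rewrite invr_ge0 ltW | ].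
  move=> w; rewrite /X4; case: ifP => h; last first.
    by rewrite normr0 mulr_ge0 ?invr_ge0 ?(ltW hb) // addr_ge0 ?exprn_ge0.
  rewrite normrX exprS; apply: le_trans (_ : b^-1 * `|X w| ^+ 3 <= _).
    by rewrite ler_wpM2r ?exprn_ge0 // bX.
  by rewrite ler_wpM2l ?invr_ge0 ?(ltW hb) // lerDr.
have iA3 : intg P A3.
  apply: (idom h3fin (K := 1)); [by rewrite /A3; mf | by [] | ].
  move=> w; rewrite /A3 mul1r; case: ifP => _.
    by rewrite normrX normr_id lerDr.
  by rewrite normr0 addr_ge0 ?exprn_ge0.
have iA5 : intg P A5.
  apply: (idom h3fin (K := b^-2)); [by rewrite /A5; mf | by rewrite invr_ge0 exprn_ge0 // ltW | ].
  move=> w; rewrite /A5; case: ifP => h; last first.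
    by rewrite normr0 mulr_ge0 ?invr_ge0 ?exprn_ge0 ?(ltW hb) // addr_ge0 ?exprn_ge0.
  rewrite normrX normr_id (_ : 5 = 2 + 3)%N // exprD; apply: le_trans (_ : b^-2 * `|X w| ^+ 3 <= _).
    by rewrite ler_wpM2r ?exprn_ge0 // -exprVn lerXn2r ?nnegrE ?invr_ge0 ?(ltW hb) // bX.
  by rewrite ler_wpM2l ?invr_ge0 ?exprn_ge0 ?(ltW hb) // lerDr.
have iX1 : intg P (fun w => X w) := iXk 1%N isT.
have iX2 : intg P (fun w => X w ^+ 2) := iXk 2%N isT.
have iX3' : intg P (fun w => X w ^+ 3) := iXk 3%N isT.
have iL : intg P L by rewrite /L; ig.
have iG : intg P G by rewrite /G; ig.
have iH : intg P (fun w => F w - L w) := iB iF iL.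
have IX0 : \int[P]_w X w = 0.
  by rewrite /Rintegral; move: hmean; rewrite unlock => ->.
have hIL : \int[P]_w L w = 1 + S.
  rewrite /L !RintegralD //; try by ig.
  rewrite !RintegralZl //; try by ig.
  rewrite Rintegral_cst // (_ : fine (P setT) = 1); last by rewrite probability_setT.
  by rewrite mul1r IX0 /S !rE_I mulr0 addr0 !addrA.
have hIG : \int[P]_w G w = C.
  rewrite /G RintegralD //; try by ig.
  by rewrite !RintegralZl // /C !rE_I.
set IH := \int[P]_w (F w - L w).
have hIF : \int[P]_w F w = IH + (1 + S).
  by rewrite /IH RintegralB // hIL; ring.
have C0 : 0 <= C.
  rewrite -hIG; apply: Rintegral_ge0 => w _; rewrite /G /A3 /A5.
  by rewrite addr_ge0 // mulr_ge0 ?exprn_ge0 ?(ltW hb) //; case: ifP => _; rewrite ?exprn_ge0.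
have hbnd : `|IH| <= M * C.
  apply: le_trans (le_normr_Rintegral measurableT iH) _.
  rewrite -hIG -RintegralZl //.
  apply: le_Rintegral => //; [exact: iAbs | exact: iZ].
have gC : (if C == 0 then 0 else IH / C) * C = IH.
  case: eqP => [c0|cn]; last by rewrite divfK //; apply/eqP.
  move: hbnd; rewrite c0 mulr0 mul0r normr_le0 => /eqP ->//.
exists (if C == 0 then 0 else IH / C); split; [|split].
- case: eqP => [_|cn]; first by rewrite normr0.
  have Cp : 0 < C by rewrite lt_neqAle eq_sym C0 andbT; apply/eqP.
  by rewrite normrM (gtr0_norm (_ : 0 < C^-1)) ?invr_gt0 // ler_pdivrMr.
- rewrite gC unlock -[LHS]fineK; last exact: integrable_fin_num iF.
  by congr EFin; rewrite -[fine _]/(\int[P]_w F w) hIF; ring.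
- by rewrite -addrA; exact: expR_ge1Dx.
Qed.
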